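(* Let $n$ be a non-negative integer and $r,s\in\mathbb{C}\setminus\mathbb{Z}^{-}$ with $s\neq0$ and $r-s\notin\mathbb{Z}^{-}$. Then \[ \sum_{k=0}^{n}(-1)^k2^{2k}\frac{\binom{n+k}{n-k}}{(k+s)\binom{k+r}{k+s}}=\sum_{k=0}^{n}(-1)^{n-k}\frac{\binom{2n+1}{2k+1}}{(n-k+s)\binom{n+r}{n-k+s}}. \]
   Context: $\mathbb{Z}^{-}$ denotes the set of negative integers. Binomial coefficients with complex entries: $\binom{x}{y}=\frac{\Gamma(x+1)}{\Gamma(y+1)\Gamma(x-y+1)}$. *)

(* Defs.v *)
From Stdlib Require Import Reals Factorial.
From Coquelicot Require Import Coquelicot.
Open Scope R_scope.

(* m^z := exp(z ln m) (principal value) for a real m > 0 and complex z. *)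
Definition Cpow_pos (m : R) (z : C) : C :=
  (exp (Re z * ln m) * cos (Im z * ln m), exp (Re z * ln m) * sin (Im z * ln m)).

Fixpoint Cprod_upto (m : nat) (f : nat -> C) : C :=
  match m with
  | O => f O
  | S m' => Cmult (Cprod_upto m' f) (f (S m'))
  end.
Fixpoint Csum_upto (n : nat) (f : nat -> C) : C :=
  match n with
  | O => f O
  | S n' => Cplus (Csum_upto n' f) (f (S n'))
  end.

(* Gauss' product formula: Gamma z = lim_{m->oo} m! m^z / (z (z+1) ... (z+m)),
   valid (convergent) for every z not in {0,-1,-2,...}. *)
Definition Gamma_seq (z : C) (m : nat) : C :=
  Cdiv (Cmult (RtoC (INR (fact m))) (Cpow_pos (INR m) z))
       (Cprod_upto m (fun j => Cplus z (RtoC (INR j)))).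

Definition CGamma (z : C) : C :=
  (real (Lim_seq (fun m => Re (Gamma_seq z m))),
   real (Lim_seq (fun m => Im (Gamma_seq z m)))).

Definition Cbinom (x y : C) : C :=
  Cdiv (CGamma (Cplus x 1))
       (Cmult (CGamma (Cplus y 1)) (CGamma (Cplus (Cminus x y) 1))).

Definition is_neg_int (z : C) : Prop := exists m : nat, z = RtoC (- INR (S m)).

(* Main.v *)
From Stdlib Require Import Reals Lra Lia Factorial Classical.
From mathcomp Require all_boot all_algebra Rstruct ring zify.

Module Comb.
Import mathcomp.boot.all_boot mathcomp.algebra.all_algebra mathcomp.reals_stdlib.Rstruct.
Import mathcomp.algebra_tactics.ring mathcomp.zify.zify.
Import GRing.Theory.

Section H.
Variable B : nat.
Definition Hs N j := \sum_(k < B.+1) 'C(N, k.*2.+1) * 'C(k, j).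
Definition Hs0 N j := \sum_(k < B) 'C(N, k.*2.+1) * 'C(k, j).
Definition Ks N j := \sum_(k < B.+1) 'C(N, k.*2) * 'C(k, j).

Lemma HsS N j : Hs N.+1 j = Hs N j + Ks N j.
Proof.
rewrite /Hs /Ks -big_split /=; apply: eq_bigr => k _.
by rewrite binS mulnDl.
Qed.

Lemma Hs0E N j : N <= B.*2 -> Hs0 N j = Hs N j.
Proof.
move=> hN; rewrite /Hs /Hs0 big_ord_recr /= bin_small ?addn0 //.
Qed.

Lemma KsS N j : Ks N.+1 j.+1 = Ks N j.+1 + Hs0 N j.+1 + Hs0 N j.
Proof.
rewrite /Ks /Hs0 !big_ord_recl /= !bin0 !bin0n /= !add0n.
rewrite -!big_split /=; apply: eq_bigr => k _.
rewrite /bump /= !add1n doubleS.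
rewrite [in LHS](binS N) [in LHS](binS k) [in RHS](binS k); ring.
Qed.

Lemma KsS0 N : Ks N.+1 0 = Ks N 0 + Hs0 N 0.
Proof.
rewrite /Ks /Hs0 !big_ord_recl /= !bin0 !muln1.
rewrite -addnA -big_split /=; congr (_ + _); apply: eq_bigr => k _.
by rewrite /bump /= !add1n doubleS binS !bin0 !muln1.
Qed.

Lemma Hrec N j : N <= B.*2 -> Hs N.+2 j.+1 = 2 * Hs N.+1 j.+1 + Hs N j.
Proof.
move=> hN; rewrite HsS KsS HsS !Hs0E //; ring.
Qed.

Lemma Hrec0 N : N <= B.*2 -> Hs N.+2 0 = 2 * Hs N.+1 0.
Proof.
move=> hN; rewrite HsS KsS0 HsS !Hs0E //; ring.
Qed.


Lemma Hs1 j : Hs 1 j = 'C(0, j).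
Proof.
by rewrite /Hs big_ord_recl /= big1 ?addn0 ?mul1n.
Qed.

Lemma Hs2 j : Hs 2 j = 2 * 'C(0, j).
Proof.
by rewrite /Hs big_ord_recl /= big1 ?addn0.
Qed.

Lemma Hclosed_aux N : (N <= B.*2.+1 -> forall j, 4^j * Hs N.+1 j = 2^N * 'C(N - j, j)) /\
  (N.+1 <= B.*2.+1 -> forall j, 4^j * Hs N.+2 j = 2^N.+1 * 'C(N.+1 - j, j)).
Proof.
elim: N => [|N [IH1 IH2]].
  split=> _ j.
    by rewrite Hs1; case: j => [|j] //=; rewrite bin0n muln0.
  rewrite Hs2; case: j => [|[|j]] //=; by rewrite !bin0n !muln0.
split; first exact: IH2.
move=> hN; have hN' : N.+1 <= B.*2 by [].
case=> [|j].
  rewrite Hrec0 // expn0 !mul1n.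
  have := IH2 (ltnW hN) 0; rewrite expn0 !mul1n; move=> ->.
  by rewrite !subn0 !bin0 !muln1 [2 ^ N.+2]expnS.
rewrite Hrec //.
have E1 := IH2 (ltnW hN) j.+1.
have E2 := IH1 (ltnW (ltnW hN)) j.
transitivity (2 * (4^j.+1 * Hs N.+2 j.+1) + 4 * (4^j * Hs N.+1 j)).
  by rewrite [4 ^ j.+1]expnS; ring.
rewrite E1 E2.
rewrite !subSS.
case: (leqP j N) => hj.
  rewrite (subSn hj) binS !expnS; ring.
have -> : N - j = 0 by apply/eqP; rewrite subn_eq0 ltnW.
have -> : N.+1 - j = 0 by apply/eqP; rewrite subn_eq0.
rewrite !bin0n; clear E1 E2; case: j hj => //.
by move=> n _; rewrite !muln0.
Qed.

End H.

Lemma coefid n m : m <= n ->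
  \sum_(k < n.+1) 'C(n.*2.+1, k.*2.+1) * 'C(k, n - m) = 4^m * 'C(n + m, m.*2).
Proof.
move=> hm.
have h := (Hclosed_aux n (n.*2)).1 (leqnSn _) (n - m).
rewrite /Hs in h.
have e1 : n.*2 - (n - m) = n + m by rewrite -addnn; lia.
rewrite e1 in h.
have e2 : 'C(n + m, n - m) = 'C(n + m, m.*2).
  have -> : n - m = (n + m) - m.*2 by rewrite -addnn; lia.
  rewrite bin_sub //; rewrite -addnn; lia.
rewrite e2 in h.
have e3 : 2 ^ n.*2 = 4 ^ (n - m) * 4 ^ m.
  by rewrite -expnD subnK // -muln2 mulnC expnM.
rewrite e3 -mulnA in h.
apply/eqP; rewrite -(eqn_pmul2l (expn_gt0 4 (n - m))); apply/eqP; exact: h.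
Qed.


Section Lin.
Local Open Scope ring_scope.
Variable R : comRingType.
Variable phi : nat -> nat -> R.
Hypothesis hrec : forall a b, phi a b.+1 = phi a b - phi a.+1 b.

Lemma phiE_gen M b a : (b < M)%N ->
  phi a b = \sum_(i < M) (-1) ^+ i * ('C(b, i))%:R * phi (a + i)%N 0.
Proof.
case: M => [//|M].
elim: b a => [|b IH] a hb.
  rewrite big_ord_recl big1 ?addr0; first by rewrite /= addn0 bin0 expr0; ring.
  by move=> i _; rewrite bin0n /= mulr0 mul0r.
rewrite hrec (IH a (ltnW hb)) (IH a.+1 (ltnW hb)).
rewrite big_ord_recl [in X in _ - X]big_ord_recr /= big_ord_recl /=.
rewrite (@bin_small b M) // mulr0 mul0r addr0 !bin0.
rewrite -addrA; congr (_ + _).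
rewrite -sumrB; apply: eq_bigr => i _.
rewrite /bump /= add1n addSn addnS binS exprS natrD; ring.
Qed.

Lemma inner n k : (k <= n)%N ->
  (-1) ^+ (n - k) * \sum_(i < k.+1) (-1) ^+ i * ('C(k, i))%:R * phi (n - k + i)%N 0 =
  \sum_(m < n.+1) (-1) ^+ m * ('C(k, n - m))%:R * phi m 0.
Proof.
move=> hk.
rewrite -(big_mkord xpredT (fun m => (-1) ^+ m * ('C(k, n - m))%:R * phi m 0)).
rewrite (big_cat_nat (n := n - k)) //=; last by lia.
rewrite [X in X + _]big1_seq ?add0r; last first.
  move=> m; rewrite mem_index_iota => /andP [_ hm].
  by rewrite bin_small ?mulr0 ?mul0r //; lia.
rewrite (big_addn 0 _ (n - k)).
have -> : (n.+1 - (n - k) = k.+1)%N by lia.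
rewrite big_mkord mulr_sumr; apply: eq_bigr => i _.
have hi : (i <= k)%N by rewrite -ltnS.
have -> : (n - (i + (n - k)) = k - i)%N by lia.
rewrite bin_sub // exprD (addnC (n - k)%N); ring.
Qed.

Lemma lin_main n :
  \sum_(k < n.+1) (-4) ^+ k * ('C(n + k, k.*2))%:R * phi k 0 =
  \sum_(k < n.+1) (-1) ^+ (n - k) * ('C(n.*2.+1, k.*2.+1))%:R * phi (n - k)%N k.
Proof.
transitivity (\sum_(k < n.+1) ('C(n.*2.+1, k.*2.+1))%:R *
   \sum_(m < n.+1) (-1) ^+ m * ('C(k, n - m))%:R * phi m 0); last first.
  apply: eq_bigr => k _.
  rewrite -inner; last by rewrite -ltnS.
  rewrite (@phiE_gen k.+1 k (n - k)%N (ltnSn k)); ring.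
under [in RHS]eq_bigr => k _ do rewrite mulr_sumr.
rewrite exchange_big /=; apply: eq_bigr => m _.
transitivity ((-1) ^+ m * phi m 0 * (\sum_(i < n.+1) 'C(n.*2.+1, i.*2.+1) * 'C(i, n - m))%:R).
  rewrite coefid; last by rewrite -ltnS.
  rewrite natrM natrX.
  have -> : (-4 : R) = (-1) * 4%:R by rewrite mulN1r.
  rewrite exprMn; ring.
rewrite natr_sum mulr_sumr; apply: eq_bigr => i _; rewrite natrM; ring.
Qed.

End Lin.

Lemma binR n k : (k <= n)%coq_nat ->
  Rmult (INR ('C(n, k))) (Rmult (INR (fact k)) (INR (fact (n - k)))) = INR (fact n).
Proof.
move/leP=> h; rewrite -!mult_INR !factE; congr INR; exact: bin_fact.
Qed.

Open Scope R_scope.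
Lemma comb_R (phi : nat -> nat -> R)
  (hrec : forall a b, phi a (S b) = phi a b - phi (S a) b) (n : nat) :
  sum_f_R0 (fun k => (-4) ^ k * INR ('C(n + k, 2 * k)) * phi k O) n =
  sum_f_R0 (fun k => (-1) ^ (n - k) * INR ('C(2 * n + 1, 2 * k + 1)) * phi (n - k)%nat k) n.
Proof.
have h4 : (-4 : R) = GRing.opp (4%:R : R).
  change (-4 : R) with (IZR (- (Z.pos 4))).
  by rewrite opp_IZR IZRposE INRE RoppE.
have h1 : (-1 : R) = GRing.opp (1 : R) by [].
rewrite !sum_f_R0E !big_mkord.
have := @lin_main _ phi hrec n.
move=> E.
under eq_bigr => i _ do rewrite RmultE RmultE RpowE INRE h4 mul2n.
under [in RHS]eq_bigr => i _ do rewrite RmultE RmultE RpowE INRE h1 mul2n mul2n !addn1.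
exact: E.
Qed.
End Comb.


From Coquelicot Require Import Coquelicot.
Require Import Defs.
Open Scope R_scope.

Lemma abs_le_inv x b : Rabs x <= b -> - b <= x <= b.
Proof. unfold Rabs; destruct (Rcase_abs x); intros; lra. Qed.

Lemma exp_upper a : a < 1 -> exp a <= / (1 - a).
Proof.
intros Ha.
assert (H1 := exp_ineq1_le (- a)).
assert (Hp : 0 < exp a) by apply exp_pos.
rewrite exp_Ropp in H1.
apply (Rmult_le_reg_r (1 - a)); [lra|].
rewrite Rinv_l by lra.
apply (Rmult_le_reg_r (/ exp a)). apply Rinv_0_lt_compat; lra.
replace (exp a * (1 - a) * / exp a) with (1 - a) by (field; lra).
lra.
Qed.

Lemma exp_bounds a : Rabs a <= /2 ->
  Rabs (exp a - 1 - a) <= 2 * a^2 /\ Rabs (exp a - 1) <= 2 * Rabs a /\ 0 < exp a <= 2.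
Proof.
intros Ha.
assert (Hl := exp_ineq1_le a).
assert (Hp : 0 < exp a) by apply exp_pos.
assert (Hab : - / 2 <= a <= /2) by (apply abs_le_inv in Ha; lra).
assert (Hu := exp_upper a ltac:(lra)).
assert (Hu2 : / (1 - a) <= 1 + a + 2 * a^2).
{ apply (Rmult_le_reg_r (1 - a)); [lra|]. rewrite Rinv_l by lra.
  assert (0 <= a^2 * (1 - 2 * a)) by (apply Rmult_le_pos; nra). nra. }
assert (0 <= a^2) by nra.
split; [|split].
- rewrite Rabs_pos_eq by lra. lra.
- destruct (Rle_dec 0 a).
  + rewrite Rabs_pos_eq by lra. rewrite (Rabs_pos_eq a) by lra. nra.
  + rewrite (Rabs_left a) by lra. apply Rabs_le. split; nra.
- split; [lra|nra].
Qed.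

Lemma cos_bounds b : Rabs b <= /2 -> Rabs (cos b - 1) <= b^2 / 2.
Proof.
intros Hb.
assert (Hab : - / 2 <= b <= /2) by (apply abs_le_inv in Hb; lra).
destruct (pre_cos_bound b 0 ltac:(lra) ltac:(lra)) as [H1 H2].
unfold cos_approx, cos_term in H1, H2. simpl in H1, H2.
rewrite Rabs_left1.
- lra.
- assert (H3 := COS_bound b). lra.
Qed.

Lemma sin_bounds_pos b : 0 <= b <= /2 -> Rabs (sin b - b) <= b^2.
Proof.
intros Hb.
destruct (pre_sin_bound b 0 ltac:(lra) ltac:(lra)) as [H1 H2].
unfold sin_approx, sin_term in H1, H2. simpl in H1, H2.
assert (H3 : b - b^3/6 <= sin b) by (eapply Rle_trans; [|exact H1]; right; field).
assert (H4 : sin b <= b - b^3/6 + b^5/120) by (eapply Rle_trans; [exact H2|]; right; field).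
assert (0 <= b^3) by (apply pow_le; lra).
assert (b^5 <= b^3) by (replace (b^5) with (b^3 * (b*b)) by ring; assert (b*b <= 1) by nra; nra).
assert (b^3 <= b^2) by (replace (b^3) with (b^2 * b) by ring; assert (0 <= b^2) by nra; nra).
apply Rabs_le. split; lra.
Qed.

Lemma sin_bounds b : Rabs b <= /2 -> Rabs (sin b - b) <= b^2.
Proof.
intros Hb.
assert (Hab : - / 2 <= b <= /2) by (apply abs_le_inv in Hb; lra).
destruct (Rle_dec 0 b).
- apply sin_bounds_pos; lra.
- replace (sin b - b) with (- (sin (-b) - (-b))) by (rewrite sin_neg; ring).
  rewrite Rabs_Ropp. replace (b^2) with ((-b)^2) by ring. apply sin_bounds_pos; lra.
Qed.

Definition cexpR (a b : R) : C := (exp a * cos b, exp a * sin b).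

Lemma Cmod_le_sum (u : C) : Cmod u <= Rabs (fst u) + Rabs (snd u).
Proof.
assert (H1 := Rabs_pos (fst u)); assert (H2 := Rabs_pos (snd u)).
unfold Cmod. rewrite <- (sqrt_pow2 (Rabs (fst u) + Rabs (snd u))) by lra.
apply sqrt_le_1_alt.
rewrite <- (pow2_abs (fst u)), <- (pow2_abs (snd u)). nra.
Qed.

Lemma cexp_est a b : Rabs a <= /2 -> Rabs b <= /2 ->
  Cmod (cexpR a b - 1 - (a, b)) <= 4 * (a^2 + b^2).
Proof.
intros Ha Hb.
destruct (exp_bounds a Ha) as [E1 [E2 [E3 E4]]].
assert (C1 := cos_bounds b Hb).
assert (S1 := sin_bounds b Hb).
eapply Rle_trans; [apply Cmod_le_sum|].
replace (fst ((cexpR a b - 1 - (a, b))%C)) with (exp a * (cos b - 1) + (exp a - 1 - a)) by (simpl; ring).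
replace (snd ((cexpR a b - 1 - (a, b))%C)) with (exp a * (sin b - b) + b * (exp a - 1)) by (simpl; ring).
assert (A1 : Rabs (exp a * (cos b - 1) + (exp a - 1 - a)) <= 2 * (b^2/2) + 2 * a^2).
{ eapply Rle_trans; [apply Rabs_triang|]. rewrite Rabs_mult, (Rabs_pos_eq (exp a)) by lra.
  assert (0 <= Rabs (cos b - 1)) by apply Rabs_pos. nra. }
assert (A2 : Rabs (exp a * (sin b - b) + b * (exp a - 1)) <= 2 * b^2 + Rabs b * (2 * Rabs a)).
{ eapply Rle_trans; [apply Rabs_triang|]. rewrite !Rabs_mult, (Rabs_pos_eq (exp a)) by lra.
  assert (0 <= Rabs (sin b - b)) by apply Rabs_pos.
  assert (0 <= Rabs b) by apply Rabs_pos.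
  assert (0 <= Rabs (exp a - 1)) by apply Rabs_pos. nra. }
assert (Rabs b * Rabs a * 2 <= a^2 + b^2).
{ assert (a^2 = Rabs a ^ 2) by (rewrite pow2_abs; reflexivity).
  assert (b^2 = Rabs b ^ 2) by (rewrite pow2_abs; reflexivity). assert (0 <= (Rabs a - Rabs b)^2) by apply pow2_ge_0. nra. }
assert (0 <= a^2) by apply pow2_ge_0.
assert (H' : Rabs b * (2 * Rabs a) <= a^2 + b^2) by lra.
set (p := Rabs b * (2 * Rabs a)) in *. set (q := a^2) in *. set (q' := b^2) in *. lra.
Qed.

Ltac ceq := apply injective_projections; simpl; try lra; try ring.

Definition nonpole (z : C) := forall j : nat, Cplus z (RtoC (INR j)) <> 0.

Lemma Cprod_nonzero z m : nonpole z -> Cprod_upto m (fun j => Cplus z (RtoC (INR j))) <> 0.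
Proof.
intros Hz. induction m; simpl.
- exact (Hz O).
- apply Cmult_neq_0; [exact IHm | exact (Hz (S m))].
Qed.

Lemma cexpR_add a b a' b' : cexpR (a + a') (b + b') = Cmult (cexpR a b) (cexpR a' b').
Proof. unfold cexpR. ceq; rewrite exp_plus, ?cos_plus, ?sin_plus; ring. Qed.

Lemma ln_step m : (1 <= m)%nat ->
  / INR (S m) <= ln (INR (S m)) - ln (INR m) <= / INR m.
Proof.
intros Hm.
assert (H0 : 1 <= INR m) by (apply (le_INR 1); lia).
rewrite S_INR.
split.
- assert (H1 := exp_ineq1_le (- / (INR m + 1))).
  assert (H2 : INR m <= exp (ln (INR m + 1) - / (INR m + 1))).
  { unfold Rminus. rewrite exp_plus, exp_ln by lra. rewrite exp_Ropp in *.
    replace (INR m) with ((INR m + 1) * (1 + - / (INR m + 1))) at 1 by (field; lra).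
    apply Rmult_le_compat_l; lra. }
  assert (H3 : ln (INR m) <= ln (exp (ln (INR m + 1) - / (INR m + 1)))) by (apply ln_le; lra).
  rewrite ln_exp in H3. lra.
- assert (H1 := exp_ineq1_le (/ INR m)).
  assert (H2 : INR m + 1 <= exp (ln (INR m) + / INR m)).
  { rewrite exp_plus, exp_ln by lra.
    replace (INR m + 1) with (INR m * (1 + / INR m)) by (field; lra).
    apply Rmult_le_compat_l; lra. }
  assert (H3 : ln (INR m + 1) <= ln (exp (ln (INR m) + / INR m))) by (apply ln_le; lra).
  rewrite ln_exp in H3. lra.
Qed.

Lemma Cprod_S m f : Cprod_upto (S m) f = Cmult (Cprod_upto m f) (f (S m)).
Proof. reflexivity. Qed.

Definition lnt (m : nat) := ln (INR (S m)) - ln (INR m).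
Definition qf (z : C) (m : nat) : C :=
  Cdiv (Cmult (RtoC (INR (S m))) (cexpR (Re z * lnt m) (Im z * lnt m))) (Cplus z (RtoC (INR (S m)))).

Lemma Gamma_seq_S z m : nonpole z -> (1 <= m)%nat ->
  Gamma_seq z (S m) = Cmult (Gamma_seq z m) (qf z m).
Proof.
intros Hz Hm.
assert (HP := Cprod_nonzero z m Hz).
assert (Hd := Hz (S m)).
unfold Gamma_seq, qf. rewrite Cprod_S.
assert (E : Cpow_pos (INR (S m)) z = Cmult (Cpow_pos (INR m) z) (cexpR (Re z * lnt m) (Im z * lnt m))).
{ unfold Cpow_pos. fold (cexpR (Re z * ln (INR m)) (Im z * ln (INR m))).
  fold (cexpR (Re z * ln (INR (S m))) (Im z * ln (INR (S m)))).
  rewrite <- cexpR_add. unfold lnt. f_equal; ring. }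
rewrite E.
replace (fact (S m)) with (S m * fact m)%nat by reflexivity.
rewrite mult_INR, RtoC_mult.
field. split; assumption.
Qed.

Lemma Cmod_sq z : Cmod z ^ 2 = Re z ^ 2 + Im z ^ 2.
Proof.
unfold Cmod, Re, Im. rewrite pow2_sqrt; [reflexivity|].
assert (H1 := pow2_ge_0 (fst z)); assert (H2 := pow2_ge_0 (snd z)); lra.
Qed.

Lemma im_le_Cmod z : Rabs (Im z) <= Cmod z.
Proof. eapply Rle_trans; [|apply Rmax_Cmod]. apply Rmax_r. Qed.

Lemma qf_est z m : nonpole z -> (1 <= m)%nat -> 2 * Cmod z <= INR m ->
  Cmod (Cminus (qf z m) 1) <= (8 * Cmod z ^ 2 + 2 * Cmod z) * (/ INR m) ^ 2.
Proof.
intros Hz Hm HZ.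
assert (HM1 : 1 <= INR m) by (apply (le_INR 1); lia).
destruct (ln_step m Hm) as [Ht1 Ht2]. fold (lnt m) in Ht1, Ht2.
rewrite S_INR in Ht1.
set (M := INR m) in *. set (t := lnt m) in *. set (Z := Cmod z) in *.
assert (HZ0 : 0 <= Z) by apply Cmod_ge_0.
assert (Hre := re_le_Cmod z). assert (Him := im_le_Cmod z). fold Z in Hre, Him.
assert (Ht0 : 0 < t) by (eapply Rlt_le_trans; [|exact Ht1]; apply Rinv_0_lt_compat; lra).
assert (HiM : 0 < / M) by (apply Rinv_0_lt_compat; lra).
assert (HMiM : M * / M = 1) by (field; lra).
set (E := cexpR (Re z * t) (Im z * t)).
set (d := Cplus z (RtoC (INR (S m)))).
assert (Hd : d <> 0) by apply Hz.
assert (Heq : Cminus (qf z m) 1 =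
   Cdiv (Cplus (Cmult (RtoC (INR (S m))) (Cminus (Cminus E 1) (Cmult z (RtoC t))))
               (Cmult z (RtoC (INR (S m) * t - 1)))) d).
{ unfold qf. fold t E d. rewrite RtoC_minus, RtoC_mult. unfold d in *. field. exact Hd. }
rewrite Heq.
assert (Hw : Cmult z (RtoC t) = (Re z * t, Im z * t)) by (unfold Re, Im; ceq).
assert (Ha : Rabs (Re z * t) <= / 2).
{ rewrite Rabs_mult, (Rabs_pos_eq t) by lra.
  apply Rle_trans with (Z * / M). apply Rmult_le_compat; try lra. apply Rabs_pos.
  apply (Rmult_le_reg_l M); [lra|]. rewrite <- Rmult_assoc, (Rmult_comm M Z), Rmult_assoc, HMiM. lra. }
assert (Hb : Rabs (Im z * t) <= / 2).
{ rewrite Rabs_mult, (Rabs_pos_eq t) by lra.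
  apply Rle_trans with (Z * / M). apply Rmult_le_compat; try lra. apply Rabs_pos.
  apply (Rmult_le_reg_l M); [lra|]. rewrite <- Rmult_assoc, (Rmult_comm M Z), Rmult_assoc, HMiM. lra. }
assert (HE : Cmod (Cminus (Cminus E 1) (Cmult z (RtoC t))) <= 4 * (Z ^ 2 * (/ M) ^ 2)).
{ rewrite Hw. eapply Rle_trans; [apply cexp_est; assumption|].
  replace ((Re z * t) ^ 2 + (Im z * t) ^ 2) with (Z ^ 2 * t ^ 2) by (unfold Z; rewrite Cmod_sq; ring).
  apply Rmult_le_compat_l; [lra|]. apply Rmult_le_compat_l; [apply pow2_ge_0|].
  apply pow_incr; lra. }
assert (HT : Rabs (INR (S m) * t - 1) <= / M).
{ rewrite S_INR. fold M. apply Rabs_le. split.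
  - assert ((M + 1) * / (M + 1) <= (M + 1) * t) by (apply Rmult_le_compat_l; lra).
    rewrite Rinv_r in H by lra. lra.
  - assert ((M + 1) * t <= (M + 1) * / M) by (apply Rmult_le_compat_l; lra).
    replace ((M + 1) * / M) with (1 + / M) in H by (field; lra). lra. }
assert (HN : Cmod (Cplus (Cmult (RtoC (INR (S m))) (Cminus (Cminus E 1) (Cmult z (RtoC t))))
               (Cmult z (RtoC (INR (S m) * t - 1)))) <= (M + 1) * (4 * (Z ^ 2 * (/ M) ^ 2)) + Z * / M).
{ eapply Rle_trans; [apply Cmod_triangle|]. rewrite !Cmod_mult, !Cmod_R.
  rewrite (Rabs_pos_eq (INR (S m))) by apply pos_INR. rewrite S_INR. fold M Z.
  apply Rplus_le_compat. apply Rmult_le_compat_l; [lra|exact HE].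
  apply Rmult_le_compat_l; [exact HZ0|rewrite S_INR in HT; exact HT]. }
assert (HD : (M + 1) / 2 <= Cmod d).
{ eapply Rle_trans; [|apply re_le_Cmod].
  replace (Re d) with (Re z + (M + 1)) by (unfold d, M; rewrite <- S_INR; reflexivity).
  eapply Rle_trans; [|apply Rle_abs]. apply abs_le_inv in Hre. lra. }
unfold Cdiv. rewrite Cmod_mult, Cmod_inv by exact Hd.
assert (HDp : 0 < Cmod d) by lra.
apply Rle_trans with (((M + 1) * (4 * (Z ^ 2 * (/ M) ^ 2)) + Z * / M) * (2 / (M + 1))).
{ apply Rmult_le_compat; try lra.
  - apply Cmod_ge_0.
  - left; apply Rinv_0_lt_compat; lra.
  - replace (2 / (M + 1)) with (/ ((M + 1) / 2)) by (field; lra).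
    apply Rinv_le_contravar; lra. }
replace (((M + 1) * (4 * (Z ^ 2 * (/ M) ^ 2)) + Z * / M) * (2 / (M + 1)))
  with (8 * Z ^ 2 * (/ M) ^ 2 + 2 * Z * (/ M * / (M + 1))) by (field; lra).
assert (/ M * / (M + 1) <= (/ M) ^ 2).
{ simpl. rewrite Rmult_1_r. apply Rmult_le_compat_l; [lra|]. apply Rinv_le_contravar; lra. }
assert (0 <= 2 * Z) by lra.
assert (2 * Z * (/ M * / (M + 1)) <= 2 * Z * (/ M) ^ 2) by (apply Rmult_le_compat_l; lra).
lra.
Qed.

Lemma exists_nat_gt (x : R) : exists N : nat, forall n, (N <= n)%nat -> x < INR n.
Proof.
assert (H := is_lim_seq_INR). apply is_lim_seq_spec in H.
destruct (H x) as [N HN]. exists N. intros n Hn. apply HN. exact Hn.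
Qed.

Lemma Cmod_mult_le1 (a b : C) : Cmod a <= 1 + Cmod (Cminus a 1).
Proof.
replace a with (Cplus (Cminus a 1) 1) at 1 by ring.
eapply Rle_trans; [apply Cmod_triangle|]. rewrite Cmod_1. lra.
Qed.

Section ProdConv.
Variables (g q : nat -> C) (M : nat) (K : R).
Hypothesis HM : (1 <= M)%nat.
Hypothesis HK : 0 <= K.
Hypothesis Hg : forall m, (M <= m)%nat -> g (S m) = Cmult (g m) (q m).
Hypothesis Hq : forall m, (M <= m)%nat -> Cmod (Cminus (q m) 1) <= K * (/ INR m) ^ 2.

Let c m := 2 * K * / INR m - 2 * K * / INR (S m).

Lemma c_ge m : (1 <= m)%nat -> K * (/ INR m) ^ 2 <= c m.
Proof.
intros Hm. assert (H1 : 1 <= INR m) by (apply (le_INR 1); lia).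
unfold c. rewrite S_INR.
replace (2 * K * / INR m - 2 * K * / (INR m + 1)) with (2 * K * (/ INR m * / (INR m + 1))) by (field; lra).
assert (/ (2 * INR m) <= / (INR m + 1)) by (apply Rinv_le_contravar; lra).
assert (0 < / INR m) by (apply Rinv_0_lt_compat; lra).
replace (/ (2 * INR m)) with (/ 2 * / INR m) in H by (field; lra).
simpl. rewrite Rmult_1_r.
assert (/ INR m * (/ 2 * / INR m) <= / INR m * / (INR m + 1)) by (apply Rmult_le_compat_l; lra).
nra.
Qed.

Lemma g_bound_aux m : (M <= m)%nat -> Cmod (g m) <= Cmod (g M) * exp (2 * K * / INR M - 2 * K * / INR m).
Proof.
induction m as [|m IH]; intros Hm.
- assert (M = 0%nat) by lia. subst. replace (2 * K * / INR 0 - 2 * K * / INR 0) with 0 by ring.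
  rewrite exp_0. lra.
- destruct (Nat.eq_dec M (S m)) as [E|E].
  + rewrite E. replace (2 * K * / INR (S m) - 2 * K * / INR (S m)) with 0 by ring.
    rewrite exp_0. lra.
  + assert (Hm' : (M <= m)%nat) by lia.
    rewrite (Hg m Hm'), Cmod_mult.
    assert (H1 := IH Hm').
    assert (H2 : Cmod (q m) <= exp (c m)).
    { eapply Rle_trans; [apply (Cmod_mult_le1 (q m) 0)|].
      eapply Rle_trans; [|apply exp_ineq1_le]. apply Rplus_le_compat_l.
      eapply Rle_trans; [apply Hq; exact Hm'|]. apply c_ge; lia. }
    replace (2 * K * / INR M - 2 * K * / INR (S m)) with ((2 * K * / INR M - 2 * K * / INR m) + c m) by (unfold c; ring).
    rewrite exp_plus, <- Rmult_assoc.
    apply Rmult_le_compat; try apply Cmod_ge_0; assumption.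
Qed.

Let B := Cmod (g M) * exp (2 * K * / INR M).

Lemma B_ge0 : 0 <= B.
Proof. unfold B. apply Rmult_le_pos; [apply Cmod_ge_0|left; apply exp_pos]. Qed.

Lemma g_bound m : (M <= m)%nat -> Cmod (g m) <= B.
Proof.
intros Hm. eapply Rle_trans; [apply g_bound_aux; exact Hm|].
unfold B. apply Rmult_le_compat_l; [apply Cmod_ge_0|].
assert (H1 : 0 < INR m) by (apply lt_0_INR; lia).
assert (0 <= 2 * K * / INR m) by (apply Rmult_le_pos; [lra|left; apply Rinv_0_lt_compat; lra]).
destruct (Rle_lt_or_eq_dec 0 (2 * K * / INR m) H) as [H2|H2].
- left. apply exp_increasing. lra.
- rewrite <- H2. right. f_equal. ring.
Qed.

Lemma g_diff m p : (M <= m)%nat ->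
  Cmod (Cminus (g (m + p)) (g m)) <= B * (2 * K * / INR m - 2 * K * / INR (m + p)).
Proof.
intros Hm. induction p as [|p IH].
- rewrite Nat.add_0_r. replace (Cminus (g m) (g m)) with (RtoC 0) by ring.
  rewrite Cmod_0. replace (2 * K * / INR m - 2 * K * / INR m) with 0 by ring. lra.
- rewrite Nat.add_succ_r.
  replace (Cminus (g (S (m + p))) (g m)) with
    (Cplus (Cminus (g (S (m + p))) (g (m + p))) (Cminus (g (m + p)) (g m))) by ring.
  eapply Rle_trans; [apply Cmod_triangle|].
  assert (Hmp : (M <= m + p)%nat) by lia.
  rewrite (Hg _ Hmp).
  replace (Cminus (Cmult (g (m + p)) (q (m + p))) (g (m + p))) with
    (Cmult (g (m + p)) (Cminus (q (m + p)) 1)) by ring.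
  rewrite Cmod_mult.
  assert (H1 : Cmod (g (m + p)) * Cmod (Cminus (q (m + p)) 1) <= B * c (m + p)).
  { apply Rmult_le_compat; try apply Cmod_ge_0.
    - apply g_bound; exact Hmp.
    - eapply Rle_trans; [apply Hq; exact Hmp|]. apply c_ge; lia. }
  unfold c in H1.
  assert (H2 := B_ge0). nra.
Qed.

Lemma g_cauchy : forall eps, 0 < eps -> exists N, forall n m, (N <= n)%nat -> (N <= m)%nat ->
  Cmod (Cminus (g n) (g m)) < eps.
Proof.
intros eps Heps.
destruct (exists_nat_gt (4 * B * K / eps)) as [N0 HN0].
exists (Nat.max N0 M). intros n m Hn Hm.
assert (HB := B_ge0).
assert (Hgen : forall a b, (Nat.max N0 M <= a)%nat -> (a <= b)%nat -> Cmod (Cminus (g b) (g a)) < eps).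
{ intros a b Ha Hab.
  replace b with (a + (b - a))%nat by lia.
  eapply Rle_lt_trans; [apply g_diff; lia|].
  assert (Ha0 : 4 * B * K / eps < INR a) by (apply HN0; lia).
  assert (HaM : 1 <= INR a) by (apply (le_INR 1); lia).
  assert (HaP : 0 < INR (a + (b - a))) by (apply lt_0_INR; lia).
  assert (0 <= 2 * K * / INR (a + (b - a))) by (apply Rmult_le_pos; [lra|left; apply Rinv_0_lt_compat; lra]).
  apply Rle_lt_trans with (B * (2 * K * / INR a)).
  { apply Rmult_le_compat_l; lra. }
  assert (Hx : 4 * B * K < eps * INR a).
  { apply (Rmult_lt_compat_l eps) in Ha0; [|lra]. replace (eps * (4 * B * K / eps)) with (4 * B * K) in Ha0 by (field; lra). lra. }
  apply (Rmult_lt_reg_r (INR a)); [lra|].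
  replace (B * (2 * K * / INR a) * INR a) with (2 * B * K) by (field; lra).
  assert (0 <= B * K) by (apply Rmult_le_pos; lra).
  lra. }
destruct (Nat.le_ge_cases n m) as [H|H].
- rewrite <- Cmod_opp. replace (Copp (Cminus (g n) (g m))) with (Cminus (g m) (g n)) by ring.
  apply Hgen; lia.
- apply Hgen; lia.
Qed.

Lemma prod_conv :
  ex_finite_lim_seq (fun m => Re (g m)) /\ ex_finite_lim_seq (fun m => Im (g m)).
Proof.
split; apply ex_lim_seq_cauchy_corr; intros eps;
  destruct (g_cauchy eps (cond_pos eps)) as [N HN]; exists N; intros n m Hn Hm;
  eapply Rle_lt_trans; try apply (HN n m Hn Hm).
- apply (re_le_Cmod (Cminus (g n) (g m))).
- apply (im_le_Cmod (Cminus (g n) (g m))).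
Qed.

End ProdConv.

Definition CL (u : nat -> C) (l : C) :=
  is_lim_seq (fun m => Re (u m)) (Re l) /\ is_lim_seq (fun m => Im (u m)) (Im l).

Lemma CL_unique u l : CL (Gamma_seq u) l -> CGamma u = l.
Proof.
intros [H1 H2]. unfold CGamma.
rewrite (is_lim_seq_unique _ _ H1), (is_lim_seq_unique _ _ H2). simpl.
destruct l; reflexivity.
Qed.

Lemma CL_mult u v a b : CL u a -> CL v b -> CL (fun m => Cmult (u m) (v m)) (Cmult a b).
Proof.
intros [Ha1 Ha2] [Hb1 Hb2]. split; simpl.
- apply (is_lim_seq_minus' _ _ _ _ (is_lim_seq_mult' _ _ _ _ Ha1 Hb1) (is_lim_seq_mult' _ _ _ _ Ha2 Hb2)).
- apply (is_lim_seq_plus' _ _ _ _ (is_lim_seq_mult' _ _ _ _ Ha1 Hb2) (is_lim_seq_mult' _ _ _ _ Ha2 Hb1)).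
Qed.

Lemma CL_ext_loc u v l : (exists N, forall m, (N <= m)%nat -> u m = v m) -> CL u l -> CL v l.
Proof.
intros [N HN] [H1 H2]. split.
- eapply is_lim_seq_ext_loc; [|exact H1]. exists N. intros m Hm. rewrite HN; auto.
- eapply is_lim_seq_ext_loc; [|exact H2]. exists N. intros m Hm. rewrite HN; auto.
Qed.

Lemma is_lim_seq_invINR k : is_lim_seq (fun m => k * / INR m) 0.
Proof.
replace (Finite 0) with (Rbar_mult k 0) by apply Rbar_mult_0_r.
apply is_lim_seq_scal_l.
replace (Finite 0) with (Rbar_inv p_infty) by reflexivity.
apply is_lim_seq_inv; [apply is_lim_seq_INR|discriminate].
Qed.

Lemma CL_norm u l k : (exists N, forall m, (N <= m)%nat -> Cmod (Cminus (u m) l) <= k * / INR m) -> CL u l.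
Proof.
intros [N HN].
assert (H0 := is_lim_seq_invINR k).
assert (Hl : forall a : R, is_lim_seq (fun m => a - k * / INR m) a).
{ intros a. replace (Finite a) with (Finite (a - 0)) by (f_equal; ring).
  apply is_lim_seq_minus'; [apply is_lim_seq_const|exact H0]. }
assert (Hu : forall a : R, is_lim_seq (fun m => a + k * / INR m) a).
{ intros a. replace (Finite a) with (Finite (a + 0)) by (f_equal; ring).
  apply is_lim_seq_plus'; [apply is_lim_seq_const|exact H0]. }
split.
- apply is_lim_seq_le_le_loc with (u := fun m => Re l - k * / INR m) (w := fun m => Re l + k * / INR m);
    [|apply Hl|apply Hu].
  exists N. intros m Hm.
  assert (H := Rle_trans _ _ _ (re_le_Cmod _) (HN m Hm)). apply abs_le_inv in H.
  simpl in H |- *. unfold Re in *. lra.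
- apply is_lim_seq_le_le_loc with (u := fun m => Im l - k * / INR m) (w := fun m => Im l + k * / INR m);
    [|apply Hl|apply Hu].
  exists N. intros m Hm.
  assert (H := Rle_trans _ _ _ (im_le_Cmod _) (HN m Hm)). apply abs_le_inv in H.
  simpl in H |- *. unfold Im in *. lra.
Qed.

Lemma Gamma_conv z : nonpole z -> CL (Gamma_seq z) (CGamma z).
Proof.
intros Hz.
destruct (exists_nat_gt (2 * Cmod z)) as [N HN].
set (M := Nat.max N 1).
set (K := 8 * Cmod z ^ 2 + 2 * Cmod z).
assert (HK : 0 <= K) by (unfold K; assert (H := Cmod_ge_0 z); assert (H' := pow2_ge_0 (Cmod z)); lra).
destruct (prod_conv (Gamma_seq z) (qf z) M K ltac:(lia) HK) as [[l1 H1] [l2 H2]].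
- intros m Hm. apply Gamma_seq_S; [exact Hz|lia].
- intros m Hm. apply qf_est; [exact Hz|lia|]. left. apply HN. lia.
- unfold CGamma, CL.
  rewrite (is_lim_seq_unique _ _ H1), (is_lim_seq_unique _ _ H2). simpl. split; assumption.
Qed.

Lemma nonpole_0 z : nonpole z -> z <> 0.
Proof. intros Hz E. apply (Hz O). rewrite E. ceq. Qed.

Lemma Cprod_shift z m :
  Cmult (Cprod_upto m (fun j => Cplus (Cplus z 1) (RtoC (INR j)))) z =
  Cmult (Cprod_upto m (fun j => Cplus z (RtoC (INR j)))) (Cplus z (RtoC (INR (S m)))).
Proof.
induction m.
- simpl. ceq.
- rewrite !Cprod_S.
  replace (Cmult (Cmult (Cprod_upto m (fun j => Cplus (Cplus z 1) (RtoC (INR j)))) (Cplus (Cplus z 1) (RtoC (INR (S m))))) z)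
    with (Cmult (Cmult (Cprod_upto m (fun j => Cplus (Cplus z 1) (RtoC (INR j)))) z) (Cplus (Cplus z 1) (RtoC (INR (S m))))) by ring.
  rewrite IHm.
  replace (Cplus (Cplus z 1) (RtoC (INR (S m)))) with (Cplus z (RtoC (INR (S (S m))))).
  + ring.
  + rewrite (S_INR (S m)), RtoC_plus. ring.
Qed.

Lemma Cpow_pos_S1 m z : (1 <= m)%nat -> Cpow_pos (INR m) (Cplus z 1) = Cmult (Cpow_pos (INR m) z) (RtoC (INR m)).
Proof.
intros Hm. assert (H0 : 0 < INR m) by (apply lt_0_INR; lia).
unfold Cpow_pos. fold (cexpR (Re z * ln (INR m)) (Im z * ln (INR m))).
replace (Re (Cplus z 1) * ln (INR m)) with (Re z * ln (INR m) + ln (INR m)) by (simpl; unfold Re; ring).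
replace (Im (Cplus z 1) * ln (INR m)) with (Im z * ln (INR m) + 0) by (simpl; unfold Im; ring).
fold (cexpR (Re z * ln (INR m) + ln (INR m)) (Im z * ln (INR m) + 0)).
rewrite cexpR_add. f_equal. unfold cexpR. rewrite exp_ln, cos_0, sin_0 by exact H0. ceq.
Qed.

Lemma Gamma_seq_shift z m : nonpole z -> (1 <= m)%nat ->
  Gamma_seq (Cplus z 1) m = Cmult (Gamma_seq z m) (Cdiv (Cmult z (RtoC (INR m))) (Cplus z (RtoC (INR (S m))))).
Proof.
intros Hz Hm.
assert (HP := Cprod_nonzero z m Hz).
assert (Hd := Hz (S m)). assert (H0 := nonpole_0 z Hz).
assert (E := Cprod_shift z m).
assert (HP' : Cprod_upto m (fun j => Cplus (Cplus z 1) (RtoC (INR j))) =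
   Cdiv (Cmult (Cprod_upto m (fun j => Cplus z (RtoC (INR j)))) (Cplus z (RtoC (INR (S m))))) z).
{ rewrite <- E. field. exact H0. }
unfold Gamma_seq. rewrite HP', Cpow_pos_S1 by exact Hm.
field. repeat split; assumption.
Qed.

Lemma ratio_lim z : CL (fun m => Cdiv (Cmult z (RtoC (INR m))) (Cplus z (RtoC (INR (S m))))) z.
Proof.
apply CL_norm with (k := 2 * (Cmod z * Cmod (Cplus z 1))).
destruct (exists_nat_gt (2 * Cmod z + 1)) as [N HN].
exists N. intros m Hm. assert (Hm' := HN m Hm).
assert (HZ := Cmod_ge_0 z). assert (HZ1 := Cmod_ge_0 (Cplus z 1)).
assert (HRe := re_le_Cmod z). apply abs_le_inv in HRe.
assert (HD : INR m / 2 <= Cmod (Cplus z (RtoC (INR (S m))))).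
{ eapply Rle_trans; [|apply re_le_Cmod]. eapply Rle_trans; [|apply Rle_abs].
  replace (Re (Cplus z (RtoC (INR (S m))))) with (Re z + (INR m + 1)) by (rewrite <- S_INR; reflexivity).
  lra. }
assert (Hd : Cplus z (RtoC (INR (S m))) <> 0).
{ intros E. rewrite E, Cmod_0 in HD. lra. }
replace (Cminus (Cdiv (Cmult z (RtoC (INR m))) (Cplus z (RtoC (INR (S m))))) z)
  with (Cdiv (Copp (Cmult z (Cplus z 1))) (Cplus z (RtoC (INR (S m))))).
2: { assert (Ea : RtoC (INR (S m)) = Cplus (RtoC (INR m)) 1) by (rewrite S_INR, RtoC_plus; reflexivity).
     rewrite Ea in Hd |- *. field. exact Hd. }
unfold Cdiv. rewrite Cmod_mult, Cmod_opp, Cmod_mult, Cmod_inv by exact Hd.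
assert (HmP : 0 < INR m) by lra.
apply Rle_trans with (Cmod z * Cmod (Cplus z 1) * / (INR m / 2)).
- apply Rmult_le_compat_l; [apply Rmult_le_pos; assumption|].
  apply Rinv_le_contravar; lra.
- right. field. lra.
Qed.

Lemma Gamma_fe z : nonpole z -> CGamma (Cplus z 1) = Cmult z (CGamma z).
Proof.
intros Hz. apply CL_unique.
rewrite Cmult_comm.
eapply CL_ext_loc; [|apply (CL_mult _ _ _ _ (Gamma_conv z Hz) (ratio_lim z))].
exists 1%nat. intros m Hm. symmetry. apply Gamma_seq_shift; assumption.
Qed.

Lemma Cprod_one m : Cprod_upto m (fun j => Cplus 1 (RtoC (INR j))) = RtoC (INR (fact (S m))).
Proof.
induction m.
- simpl. ceq.
- rewrite Cprod_S, IHm. replace (fact (S (S m))) with (S (S m) * fact (S m))%nat by reflexivity.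
  rewrite mult_INR, RtoC_mult, (S_INR (S m)), RtoC_plus. ring.
Qed.

Lemma Gamma_one : CGamma 1 = 1.
Proof.
apply CL_unique. apply CL_norm with (k := 1). exists 1%nat. intros m Hm.
assert (H0 : 0 < INR m) by (apply lt_0_INR; lia).
unfold Gamma_seq. rewrite Cprod_one.
replace (Cpow_pos (INR m) 1) with (RtoC (INR m)).
2: { unfold Cpow_pos. simpl. rewrite Rmult_1_l, Rmult_0_l, exp_ln, cos_0, sin_0 by exact H0. ceq. }
replace (fact (S m)) with (S m * fact m)%nat by reflexivity.
rewrite mult_INR, S_INR.
assert (Hf : 0 < INR (fact m)) by (apply lt_0_INR, lt_O_fact).
replace (Cminus (Cdiv (Cmult (RtoC (INR (fact m))) (RtoC (INR m))) (RtoC ((INR m + 1) * INR (fact m)))) 1)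
  with (RtoC (- / (INR m + 1))).
2: { assert (Hn : (INR m + 1) * INR (fact m) <> 0) by (apply Rgt_not_eq; apply Rmult_lt_0_compat; lra).
     rewrite <- RtoC_mult, <- RtoC_div by exact Hn. rewrite <- RtoC_minus. f_equal. field. lra. }
rewrite Cmod_R, Rabs_Ropp, Rabs_pos_eq by (left; apply Rinv_0_lt_compat; lra).
rewrite Rmult_1_l. apply Rinv_le_contravar; lra.
Qed.

Fixpoint poch (z : C) (k : nat) : C :=
  match k with
  | O => 1
  | S k' => Cmult (poch z k') (Cplus z (RtoC (INR k')))
  end.

Lemma nonpole_shift z k : nonpole z -> nonpole (Cplus z (RtoC (INR k))).
Proof.
intros Hz j. replace (Cplus (Cplus z (RtoC (INR k))) (RtoC (INR j))) with (Cplus z (RtoC (INR (k + j)))).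
- apply Hz.
- rewrite plus_INR, RtoC_plus. ring.
Qed.

Lemma Gamma_shift z k : nonpole z -> CGamma (Cplus z (RtoC (INR k))) = Cmult (poch z k) (CGamma z).
Proof.
intros Hz. induction k.
- simpl. replace (Cplus z (RtoC 0)) with z by ceq. ring.
- replace (Cplus z (RtoC (INR (S k)))) with (Cplus (Cplus z (RtoC (INR k))) 1)
    by (rewrite S_INR, RtoC_plus; ring).
  rewrite Gamma_fe by (apply nonpole_shift; exact Hz).
  rewrite IHk. simpl. ring.
Qed.

Lemma poch_nonzero z k : nonpole z -> poch z k <> 0.
Proof.
intros Hz. induction k; simpl.
- intros E. injection E. lra.
- apply Cmult_neq_0; [exact IHk|apply Hz].
Qed.

Lemma nonpole_one : nonpole 1.
Proof.
intros j E. assert (H := pos_INR j). apply (f_equal fst) in E. simpl in E. lra.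
Qed.

Lemma poch_one j : poch 1 j = RtoC (INR (fact j)).
Proof.
induction j.
- reflexivity.
- simpl poch. rewrite IHj. replace (fact (S j)) with (S j * fact j)%nat by reflexivity.
  rewrite mult_INR, S_INR, !RtoC_mult, RtoC_plus. ring.
Qed.

Lemma Gamma_nat j : CGamma (Cplus (RtoC (INR j)) 1) = RtoC (INR (fact j)).
Proof.
rewrite Cplus_comm, (Gamma_shift 1 j nonpole_one), Gamma_one, poch_one. ring.
Qed.

Lemma Csum_ext n (f g : nat -> C) : (forall k, (k <= n)%nat -> f k = g k) -> Csum_upto n f = Csum_upto n g.
Proof.
induction n; intros H; simpl.
- apply H; lia.
- rewrite IHn by (intros; apply H; lia). rewrite H by lia. reflexivity.
Qed.

Lemma Csum_scal n (W : C) (f : nat -> C) : Csum_upto n (fun k => Cmult W (f k)) = Cmult W (Csum_upto n f).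
Proof. induction n; simpl; [reflexivity|]. rewrite IHn. ring. Qed.

Lemma Csum_zero n (f : nat -> C) : (forall k, (k <= n)%nat -> f k = RtoC 0) -> Csum_upto n f = RtoC 0.
Proof.
induction n; intros H; simpl.
- apply H; lia.
- rewrite IHn by (intros; apply H; lia). rewrite H by lia. ring.
Qed.

Lemma Re_Csum n (f : nat -> C) : Re (Csum_upto n f) = sum_f_R0 (fun k => Re (f k)) n.
Proof. induction n; simpl; [reflexivity|]. rewrite <- IHn. reflexivity. Qed.

Lemma Im_Csum n (f : nat -> C) : Im (Csum_upto n f) = sum_f_R0 (fun k => Im (f k)) n.
Proof. induction n; simpl; [reflexivity|]. rewrite <- IHn. reflexivity. Qed.

Lemma Cdiv_0_r a : Cdiv a (RtoC 0) = RtoC 0.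
Proof. unfold Cdiv, Cinv. ceq. Qed.

Lemma nonpole_of z : ~ is_neg_int z -> z <> RtoC 0 -> nonpole z.
Proof.
intros Hn H0 j E. destruct j.
- apply H0. rewrite <- E. ceq.
- apply Hn. exists j. destruct z as [a b]. unfold Cplus, RtoC in E. simpl in E.
  injection E. intros E2 E1. apply injective_projections; simpl; lra.
Qed.

Lemma nonpole_plus1 z : ~ is_neg_int z -> nonpole (Cplus z 1).
Proof.
intros Hn j E. apply Hn. exists j. destruct z as [a b]. unfold Cplus, RtoC in E. simpl in E.
injection E. intros E2 E1. rewrite S_INR. apply injective_projections; simpl; lra.
Qed.

Lemma pow_m4 k : (-1) ^ k * 2 ^ (2 * k) = (-4) ^ k.
Proof.
rewrite pow_mult. replace (2 ^ 2) with 4 by ring. rewrite <- Rpow_mult_distr. f_equal. ring.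
Qed.

Lemma fact_INR_nz j : INR (fact j) <> 0.
Proof. apply Rgt_not_eq, lt_0_INR, lt_O_fact. Qed.

Lemma RtoC_nz x : x <> 0 -> RtoC x <> RtoC 0.
Proof. intros H E. apply H. exact (f_equal fst E). Qed.

Lemma Cbinom_nat N K : (K <= N)%nat -> forall a b c : C,
  a = RtoC (INR N) -> b = RtoC (INR K) -> c = RtoC (INR (N - K)) ->
  Cdiv (CGamma (Cplus a 1)) (Cmult (CGamma (Cplus b 1)) (CGamma (Cplus c 1))) =
  RtoC (INR (binomial.binomial N K)).
Proof.
intros HK a b c -> -> ->. rewrite !Gamma_nat.
assert (H := Comb.binR N K HK).
change (ssrnat.subn N K) with (N - K)%nat in H.
rewrite <- H, !RtoC_mult. field. split; apply RtoC_nz, fact_INR_nz.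
Qed.


Theorem theorem26 (n : nat) (r s : C)
  (hr : ~ is_neg_int r) (hs : ~ is_neg_int s) (hs0 : s <> RtoC 0) (hrs : ~ is_neg_int (Cminus r s)) :
  Csum_upto n (fun k =>
    Cdiv (Cmult (RtoC ((-1) ^ k * 2 ^ (2 * k)))
                (Cbinom (RtoC (INR (n + k))) (RtoC (INR n - INR k))))
         (Cmult (Cplus (RtoC (INR k)) s)
                (Cbinom (Cplus (RtoC (INR k)) r) (Cplus (RtoC (INR k)) s))))
  =
  Csum_upto n (fun k =>
    Cdiv (Cmult (RtoC ((-1) ^ (n - k)))
                (Cbinom (RtoC (INR (2 * n + 1))) (RtoC (INR (2 * k + 1)))))
         (Cmult (Cplus (RtoC (INR n - INR k)) s)
                (Cbinom (Cplus (RtoC (INR n)) r) (Cplus (RtoC (INR n - INR k)) s)))).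
Proof.
set (x := Cplus r 1). set (y := Cplus (Cminus r s) 1).
assert (Hs : nonpole s) by (apply nonpole_of; assumption).
assert (Hx : nonpole x) by (apply nonpole_plus1; assumption).
assert (Hy : nonpole y) by (apply nonpole_plus1; assumption).
set (Gx := CGamma x). set (Gs := CGamma s). set (Gy := CGamma y).
assert (BL : forall k, Cbinom (Cplus (RtoC (INR k)) r) (Cplus (RtoC (INR k)) s) =
   Cdiv (Cmult (poch x k) Gx) (Cmult (Cmult (poch s (S k)) Gs) Gy)).
{ intros k. unfold Cbinom.
  replace (Cplus (Cplus (RtoC (INR k)) r) 1) with (Cplus x (RtoC (INR k))) by (unfold x; ring).
  replace (Cplus (Cplus (RtoC (INR k)) s) 1) with (Cplus s (RtoC (INR (S k)))) by (rewrite S_INR, RtoC_plus; ring).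
  replace (Cplus (Cminus (Cplus (RtoC (INR k)) r) (Cplus (RtoC (INR k)) s)) 1) with y by (unfold y; ring).
  rewrite !Gamma_shift by assumption. reflexivity. }
assert (BR : forall k, (k <= n)%nat -> Cbinom (Cplus (RtoC (INR n)) r) (Cplus (RtoC (INR n - INR k)) s) =
   Cdiv (Cmult (poch x n) Gx) (Cmult (Cmult (poch s (S (n - k))) Gs) (Cmult (poch y k) Gy))).
{ intros k Hk. unfold Cbinom.
  replace (Cplus (Cplus (RtoC (INR n)) r) 1) with (Cplus x (RtoC (INR n))) by (unfold x; ring).
  replace (Cplus (Cplus (RtoC (INR n - INR k)) s) 1) with (Cplus s (RtoC (INR (S (n - k)))))
    by (rewrite S_INR, minus_INR, RtoC_plus, RtoC_minus by exact Hk; ring).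
  replace (Cplus (Cminus (Cplus (RtoC (INR n)) r) (Cplus (RtoC (INR n - INR k)) s)) 1) with (Cplus y (RtoC (INR k)))
    by (unfold y; rewrite RtoC_minus; ring).
  rewrite !Gamma_shift by assumption. reflexivity. }
assert (BN1 : forall k, (k <= n)%nat -> Cbinom (RtoC (INR (n + k))) (RtoC (INR n - INR k)) =
   RtoC (INR (binomial.binomial (n + k) (2 * k)))).
{ intros k Hk. unfold Cbinom.
  rewrite (Cmult_comm (CGamma (Cplus (RtoC (INR n - INR k)) 1))).
  apply Cbinom_nat; [lia|reflexivity| |].
  - rewrite <- RtoC_minus. f_equal. rewrite plus_INR, mult_INR. simpl. lra.
  - f_equal. replace (n + k - 2 * k)%nat with (n - k)%nat by lia. rewrite minus_INR by exact Hk. reflexivity. }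
assert (BN2 : forall k, (k <= n)%nat -> Cbinom (RtoC (INR (2 * n + 1))) (RtoC (INR (2 * k + 1))) =
   RtoC (INR (binomial.binomial (2 * n + 1) (2 * k + 1)))).
{ intros k Hk. unfold Cbinom.
  apply Cbinom_nat; [lia|reflexivity|reflexivity|].
  rewrite <- RtoC_minus. f_equal. rewrite minus_INR by lia. reflexivity. }
assert (Hsk : forall k, Cplus s (RtoC (INR k)) <> RtoC 0) by (intros k; apply Hs).
assert (Hks : forall k, Cplus (RtoC (INR k)) s <> RtoC 0) by (intros k; rewrite Cplus_comm; apply Hs).
assert (Hpx := poch_nonzero x). assert (Hps := poch_nonzero s). assert (Hpy := poch_nonzero y).
destruct (classic (Gx = RtoC 0 \/ Gs = RtoC 0 \/ Gy = RtoC 0)) as [HZ|HNZ].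
- rewrite !Csum_zero; [reflexivity| |].
  + intros k Hk. rewrite BR by exact Hk.
    replace (Cdiv (Cmult (poch x n) Gx) (Cmult (Cmult (poch s (S (n - k))) Gs) (Cmult (poch y k) Gy))) with (RtoC 0).
    * replace (Cmult (Cplus (RtoC (INR n - INR k)) s) (RtoC 0)) with (RtoC 0) by ring. apply Cdiv_0_r.
    * destruct HZ as [E|[E|E]]; rewrite E.
      -- unfold Cdiv. ring.
      -- replace (Cmult (Cmult (poch s (S (n - k))) (RtoC 0)) (Cmult (poch y k) Gy)) with (RtoC 0) by ring.
         symmetry. apply Cdiv_0_r.
      -- replace (Cmult (Cmult (poch s (S (n - k))) Gs) (Cmult (poch y k) (RtoC 0))) with (RtoC 0) by ring.
         symmetry. apply Cdiv_0_r.
  + intros k Hk. rewrite BL.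
    replace (Cdiv (Cmult (poch x k) Gx) (Cmult (Cmult (poch s (S k)) Gs) Gy)) with (RtoC 0).
    * replace (Cmult (Cplus (RtoC (INR k)) s) (RtoC 0)) with (RtoC 0) by ring. apply Cdiv_0_r.
    * destruct HZ as [E|[E|E]]; rewrite E.
      -- unfold Cdiv. ring.
      -- replace (Cmult (Cmult (poch s (S k)) (RtoC 0)) Gy) with (RtoC 0) by ring.
         symmetry. apply Cdiv_0_r.
      -- replace (Cmult (Cmult (poch s (S k)) Gs) (RtoC 0)) with (RtoC 0) by ring.
         symmetry. apply Cdiv_0_r.
- apply not_or_and in HNZ. destruct HNZ as [HGx HNZ]. apply not_or_and in HNZ. destruct HNZ as [HGs HGy].
  set (W := Cdiv (Cmult Gs Gy) Gx).
  set (f := fun a b => Cdiv (Cmult (poch s a) (poch y b)) (poch x (a + b))).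
  assert (frec : forall a b, f a (S b) = Cminus (f a b) (f (S a) b)).
  { intros a b. unfold f. rewrite Nat.add_succ_r. simpl poch.
    assert (E1 : Cplus s (RtoC (INR a)) = Cminus (Cplus x (RtoC (INR (a + b)))) (Cplus y (RtoC (INR b)))).
    { unfold x, y. rewrite plus_INR, RtoC_plus. ring. }
    rewrite E1. field. split; [apply Hx|apply Hpx; exact Hx]. }
  rewrite (Csum_ext n _ (fun k => Cmult W (Cmult (RtoC ((-4) ^ k * INR (binomial.binomial (n + k) (2 * k)))) (f k O)))).
  2: { intros k Hk. rewrite BL, BN1 by exact Hk. unfold f, W. rewrite Nat.add_0_r, pow_m4.
       change (poch s (S k)) with (Cmult (poch s k) (Cplus s (RtoC (INR k)))).
       rewrite RtoC_mult. replace (poch y 0) with (RtoC 1) by reflexivity. field.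
       repeat split; try assumption; try apply Hpx; try apply Hps; try apply Hsk; try apply Hks; assumption. }
  rewrite (Csum_ext n (fun k => Cdiv (Cmult (RtoC ((-1) ^ (n - k)))
                (Cbinom (RtoC (INR (2 * n + 1))) (RtoC (INR (2 * k + 1)))))
         (Cmult (Cplus (RtoC (INR n - INR k)) s)
                (Cbinom (Cplus (RtoC (INR n)) r) (Cplus (RtoC (INR n - INR k)) s))))
     (fun k => Cmult W (Cmult (RtoC ((-1) ^ (n - k) * INR (binomial.binomial (2 * n + 1) (2 * k + 1)))) (f (n - k)%nat k)))).
  2: { intros k Hk. rewrite BR, BN2 by exact Hk. unfold f, W.
       replace (n - k + k)%nat with n by lia.
       change (poch s (S (n - k))) with (Cmult (poch s (n - k)) (Cplus s (RtoC (INR (n - k))))).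
       rewrite <- (minus_INR n k) by exact Hk. rewrite (Cplus_comm (RtoC (INR (n - k))) s).
       rewrite RtoC_mult. field.
       repeat split; try assumption; try apply Hpx; try apply Hps; try apply Hpy; try apply Hsk; assumption. }
  rewrite !Csum_scal. f_equal.
  assert (hre : forall a b, Re (f a (S b)) = Re (f a b) - Re (f (S a) b)).
  { intros a b. rewrite frec. reflexivity. }
  assert (him : forall a b, Im (f a (S b)) = Im (f a b) - Im (f (S a) b)).
  { intros a b. rewrite frec. reflexivity. }
  apply injective_projections.
  + change (Re (Csum_upto n (fun k => Cmult (RtoC ((-4) ^ k * INR (binomial.binomial (n + k) (2 * k)))) (f k O))) =
            Re (Csum_upto n (fun k => Cmult (RtoC ((-1) ^ (n - k) * INR (binomial.binomial (2 * n + 1) (2 * k + 1)))) (f (n - k)%nat k)))).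
    rewrite !Re_Csum.
    rewrite (sum_eq _ (fun k => (-4) ^ k * INR (binomial.binomial (n + k) (2 * k)) * Re (f k O)))
      by (intros; apply re_scal_l).
    rewrite (sum_eq (fun k => Re (Cmult (RtoC ((-1) ^ (n - k) * INR (binomial.binomial (2 * n + 1) (2 * k + 1)))) (f (n - k)%nat k)))
              (fun k => (-1) ^ (n - k) * INR (binomial.binomial (2 * n + 1) (2 * k + 1)) * Re (f (n - k)%nat k)))
      by (intros; apply re_scal_l).
    exact (Comb.comb_R (fun a b => Re (f a b)) hre n).
  + change (Im (Csum_upto n (fun k => Cmult (RtoC ((-4) ^ k * INR (binomial.binomial (n + k) (2 * k)))) (f k O))) =
            Im (Csum_upto n (fun k => Cmult (RtoC ((-1) ^ (n - k) * INR (binomial.binomial (2 * n + 1) (2 * k + 1)))) (f (n - k)%nat k)))).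
    rewrite !Im_Csum.
    rewrite (sum_eq _ (fun k => (-4) ^ k * INR (binomial.binomial (n + k) (2 * k)) * Im (f k O)))
      by (intros; apply im_scal_l).
    rewrite (sum_eq (fun k => Im (Cmult (RtoC ((-1) ^ (n - k) * INR (binomial.binomial (2 * n + 1) (2 * k + 1)))) (f (n - k)%nat k)))
              (fun k => (-1) ^ (n - k) * INR (binomial.binomial (2 * n + 1) (2 * k + 1)) * Im (f (n - k)%nat k)))
      by (intros; apply im_scal_l).
    exact (Comb.comb_R (fun a b => Im (f a b)) him n).
Qed.
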